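(* Consider binary classification with $\mathbb{P}(Y=1\mid X)=\eta(f(W,X))$, where $\eta:\mathbb{R}\to[0,1]$ is strictly increasing and differentiable, $f(W,x)=1_p^\top\sigma(Wx)$ with $W\in\mathbb{R}^{p\times d}$, $x\in\mathbb{R}^d$, and $\sigma(u)=u^2/2$ applied elementwise, trained with the least-squares loss $(Y-\eta(f(W,X)))^2$. Let $\nabla f(W,x)\in\mathbb{R}^{p\times d}$ be the gradient in $W$, $v_W(x)=\eta(f(W,x))(1-\eta(f(W,x)))$, $U_W(x)=\eta'(f(W,x))^2\,\nabla f(W,x)\otimes\nabla f(W,x)$, and $\Sigma_{\mathrm{ERM}}=\mathbb{E}[U_W(X)]^{-1}\mathbb{E}[v_W(X)U_W(X)]\mathbb{E}[U_W(X)]^{-1}$. Then $$\mathbb{E}U_W(X)=(W\otimes W)\cdot\mathbb{E}\big[\eta'(f(W,X))^2\,XX^\top\otimes XX^\top\big],\qquad \mathbb{E}[v_W(X)U_W(X)]=(W\otimes W)\,\mathbb{E}\big[v_W(X)\eta'(f(W,X))^2\,XX^\top\otimes XX^\top\big].$$ Suppose further that $G$ is the group of circular shifts of $\mathbb{R}^d$, $(g_ix)_{(j+i)\bmod d}=x_j$, $i=0,\dots,d-1$, with uniform distribution $\mathbb{Q}$, that $f(W,gx)=f(W,x)$ for all $g\in G$ and $x$, and let $\Sigma_{\mathrm{aERM}}=\Sigma_{\mathrm{ERM}}-\mathbb{E}[U_W(X)]^{-1}\mathbb{E}\big[v_W(X)\,\mathrm{Cov}_{g\sim\mathbb{Q}}\big(\eta'(f(W,gX))\nabla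 f(W,gX)\big)\big]\mathbb{E}[U_W(X)]^{-1}$. Then, with $C_x$ the circulant matrix $C_x(i,j)=x_{i-j+1}$ (indices mod $d$), $$\mathbb{E}U_W(X)\,\Sigma_{\mathrm{aERM}}\,\mathbb{E}U_W(X)=(W\otimes W)\cdot d^{-2}\,\mathbb{E}\big[v_W(X)\eta'(f(W,X))^2\,C_XC_X^\top\otimes C_XC_X^\top\big],$$ and hence $$\mathbb{E}[U_W(X)](\Sigma_{\mathrm{ERM}}-\Sigma_{\mathrm{aERM}})\mathbb{E}[U_W(X)]=(W\otimes W)\,\mathbb{E}\Big[v_W(X)\eta'(f(W,X))^2\big(XX^\top\otimes XX^\top-d^{-2}\,C_XC_X^\top\otimes C_XC_X^\top\big)\Big].$$
   Context: $\otimes$ is the Kronecker product; for $p\times d$ matrices $A,B$, $A\otimes B$ has entries indexed by $((i,i'),(j,j'))$ equal to $A_{ij}B_{i'j'}$. When a matrix inverse or product between such arrays is taken, they are viewed as $pd\times pd$ matrices via the index identification $((i,i'),(j,j'))\leftrightarrow((i,j),(i',j'))$, so that $\nabla f\otimes\nabla f$ corresponds to $\mathrm{vec}(\nabla f)\mathrm{vec}(\nabla f)^\top$. $\Sigma_{\mathrm{ERM}}$ and $\Sigma_{\mathrm{aERM}}$ are the asymptotic covariances of the least-squares ERM and augmented ERM for $W$. The covariance $\mathrm{Cov}_{g\sim\mathbb{Q}}$ is over $g$ with $X$ fixed. *)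

(* Defs.v *)
From HB Require Import structures.
From mathcomp Require Import all_boot all_order all_algebra.
From mathcomp Require Import all_classical all_reals all_analysis.
From mathcomp Require Import mxtens.
Set Implicit Arguments. Unset Strict Implicit. Unset Printing Implicit Defensive.
Import Order.TTheory GRing.Theory Num.Theory.
Local Open Scope ring_scope.
Local Open Scope classical_set_scope.

(* Index conventions: a pair (i,j) in 'I_m * 'I_n is identified with the
   index mxtens_index (i,j) (= i*n + j) of 'I_(m*n); this is the convention of
   the Kronecker product  A *t B  (tensmx) of mathcomp.real_closed.mxtens,
   whose entry at ((i,i'),(j,j')) is A i j * B i' j'. *)

Definition vecm (R : realType) (m n : nat) (A : 'M[R]_(m, n)) : 'cV[R]_(m * n) :=
  \col_k A (mxtens_unindex k).1 (mxtens_unindex k).2.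

(* The index identification ((i,i'),(j,j')) <-> ((i,j),(i',j')):
   a Kronecker-indexed array M : 'M_(m*m', n*n') viewed as an (m n) x (m' n')
   matrix. *)
Definition realign (R : realType) (m n m' n' : nat) (M : 'M[R]_(m * m', n * n'))
  : 'M[R]_(m * n, m' * n') :=
  \matrix_(a, b) M (mxtens_index ((mxtens_unindex a).1, (mxtens_unindex b).1))
                   (mxtens_index ((mxtens_unindex a).2, (mxtens_unindex b).2)).

Definition sigma2 (R : realType) (u : R) : R := u ^+ 2 / 2.

Definition fnet (R : realType) (p d : nat) (W : 'M[R]_(p, d)) (x : 'cV[R]_d) : R :=
  \sum_(k < p) sigma2 ((W *m x) k 0).

Definition gradf (R : realType) (p d : nat) (W : 'M[R]_(p, d)) (x : 'cV[R]_d)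
  : 'M[R]_(p, d) :=
  \matrix_(i, j) derive1 (fun t : R => fnet (W + t *: delta_mx i j) x) 0.

Definition vW (R : realType) (p d : nat) (eta : R -> R) (W : 'M[R]_(p, d))
  (x : 'cV[R]_d) : R :=
  eta (fnet W x) * (1 - eta (fnet W x)).

Definition UW (R : realType) (p d : nat) (eta : R -> R) (W : 'M[R]_(p, d))
  (x : 'cV[R]_d) : 'M[R]_(p * d) :=
  ((derive1 eta (fnet W x)) ^+ 2) *: (vecm (gradf W x) *m (vecm (gradf W x))^T).

Definition Emx (R : realType) (dT : measure_display) (T : measurableType dT)
  (P : probability T R) (m n : nat) (F : T -> 'M[R]_(m, n)) : 'M[R]_(m, n) :=
  \matrix_(i, j) Rintegral P setT (fun t => F t i j).

Definition shift_idx (d : nat) (i k : 'I_d) : 'I_d :=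
  Ordinal (ltn_pmod (k + d - i) (leq_ltn_trans (leq0n k) (ltn_ord k))).

Definition shiftv (R : realType) (d : nat) (i : 'I_d) (x : 'cV[R]_d) : 'cV[R]_d :=
  \col_k x (shift_idx i k) 0.

(* circulant matrix C_x(i,j) = x_{i-j} (0-based, indices mod d) *)
Definition circulant (R : realType) (d : nat) (x : 'cV[R]_d) : 'M[R]_d :=
  \matrix_(i, j) x (shift_idx j i) 0.

(* covariance (as vec-covariance) of Z(g) for g uniform on the d shifts *)
Definition covQ (R : realType) (d N : nat) (Z : 'I_d -> 'cV[R]_N) : 'M[R]_N :=
  let mean := (d%:R)^-1 *: \sum_(i < d) Z i in
  (d%:R)^-1 *: \sum_(i < d) (Z i *m (Z i)^T) - mean *m mean^T.

Definition covW (R : realType) (p d : nat) (eta : R -> R) (W : 'M[R]_(p, d))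
  (x : 'cV[R]_d) : 'M[R]_(p * d) :=
  covQ (fun i : 'I_d =>
          vecm ((derive1 eta (fnet W (shiftv i x))) *: gradf W (shiftv i x))).

(* column vector as a d-tuple (to use the product sigma-algebra on R^d) *)
Definition tup (R : realType) (d : nat) (x : 'cV[R]_d) : d.-tuple R :=
  [tuple x i 0 | i < d].

Definition SigmaERM (R : realType) (dT : measure_display) (T : measurableType dT)
  (P : probability T R) (p d : nat) (X : T -> 'cV[R]_d) (eta : R -> R)
  (W : 'M[R]_(p, d)) : 'M[R]_(p * d) :=
  let EU := Emx P (fun t => UW eta W (X t)) in
  invmx EU *m Emx P (fun t => vW eta W (X t) *: UW eta W (X t)) *m invmx EU.

Definition SigmaaERM (R : realType) (dT : measure_display) (T : measurableType dT)
  (P : probability T R) (p d : nat) (X : T -> 'cV[R]_d) (eta : R -> R)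
  (W : 'M[R]_(p, d)) : 'M[R]_(p * d) :=
  let EU := Emx P (fun t => UW eta W (X t)) in
  SigmaERM P X eta W
  - invmx EU *m Emx P (fun t => vW eta W (X t) *: covW eta W (X t)) *m invmx EU.

(* Main.v *)
Require Import Defs.
From HB Require Import structures.
From mathcomp Require Import all_boot all_order all_algebra.
From mathcomp Require Import all_classical all_reals all_analysis.
From mathcomp Require Import mxtens.
From mathcomp Require Import ring lra.
From mathcomp Require Import measurable_realfun.
Import Order.TTheory GRing.Theory Num.Theory.
Set Implicit Arguments. Unset Strict Implicit. Unset Printing Implicit Defensive.
Import numFieldNormedType.Exports.
Local Open Scope ring_scope.
Local Open Scope classical_set_scope.



Section Gen.
Variables (R : realType) (dT : measure_display) (T : measurableType dT).
Variable (P : probability T R).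

Lemma eqint (f g : T -> \bar R) : (forall t, f t = g t) ->
  P.-integrable setT f -> P.-integrable setT g.
Proof. by move=> fg; apply: eq_integrable => // t _; exact: fg. Qed.

Definition Imx (m n : nat) (F : T -> 'M[R]_(m, n)) :=
  forall i j, P.-integrable setT (EFin \o (fun t => F t i j)).

Lemma int_sumE I (s : seq I) (h : I -> T -> R) :
  (forall i, P.-integrable setT (EFin \o h i)) ->
  P.-integrable setT (EFin \o (fun t => \sum_(i <- s) h i t)).
Proof.
move=> hi; apply: (@eqint ((fun t => \sum_(i <- s) (h i t)%:E))) => //.
  by move=> t /=; rewrite sumEFin.
by apply: integrable_sum => // i _; exact: hi.
Qed.

Lemma Rintegral_sum I (s : seq I) (h : I -> T -> R) :
  (forall i, P.-integrable setT (EFin \o h i)) ->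
  \int[P]_(t in setT) (\sum_(i <- s) h i t) =
  \sum_(i <- s) \int[P]_(t in setT) h i t.
Proof.
move=> hi; elim: s => [|i s IH].
  rewrite big_nil (@eq_Rintegral _ _ _ P _ (cst 0)); last by move=> t _; rewrite big_nil.
  by rewrite Rintegral_cst // mul0r.
rewrite big_cons -IH -RintegralD //; last exact: int_sumE.
by apply: eq_Rintegral => t _; rewrite big_cons.
Qed.

Lemma ImxD m n (F G : T -> 'M[R]_(m, n)) :
  Imx F -> Imx G -> Imx (fun t => F t + G t).
Proof.
move=> hF hG i j; apply: (@eqint (((EFin \o (fun t => F t i j)) \+ (EFin \o (fun t => G t i j))))) => //.
  by move=> t /=; rewrite mxE.
exact: integrableD.
Qed.

Lemma ImxZ m n c (F : T -> 'M[R]_(m, n)) : Imx F -> Imx (fun t => c *: F t).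
Proof.
move=> hF i j; apply: (@eqint ((fun t => (c%:E * (EFin \o (fun t => F t i j)) t)%E))) => //.
  by move=> t /=; rewrite mxE.
exact: integrableZl.
Qed.

Lemma Imx_sum m n I (s : seq I) (F : I -> T -> 'M[R]_(m, n)) :
  (forall k, Imx (F k)) -> Imx (fun t => \sum_(k <- s) F k t).
Proof.
move=> hF i j; apply: (@eqint ((EFin \o (fun t => \sum_(k <- s) F k t i j)))) => //.
  by move=> t /=; rewrite summxE.
by apply: int_sumE => k; exact: hF.
Qed.

Lemma Imx_ext m n (F G : T -> 'M[R]_(m, n)) : (forall t, F t = G t) -> Imx F -> Imx G.
Proof. by move=> FG hF i j; apply: (eqint _ (hF i j)) => t /=; rewrite FG. Qed.

Lemma ImxB m n (F G : T -> 'M[R]_(m, n)) :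
  Imx F -> Imx G -> Imx (fun t => F t - G t).
Proof.
move=> hF hG; apply: (Imx_ext (F := fun t => F t + (-1) *: G t)).
  by move=> t; rewrite scaleN1r.
by apply: ImxD => //; exact: ImxZ.
Qed.

Lemma Imx_mull m n k (A : 'M[R]_(k, m)) (F : T -> 'M[R]_(m, n)) :
  Imx F -> Imx (fun t => A *m F t).
Proof.
move=> hF i j; apply: (@eqint ((EFin \o (fun t => \sum_(l < m) A i l * F t l j)))) => //.
  by move=> t /=; rewrite mxE.
apply: int_sumE => l; apply: (@eqint ((fun t => ((A i l)%:E * (EFin \o (fun t => F t l j)) t)%E))) => //.
exact: integrableZl.
Qed.

Lemma EmxD m n (F G : T -> 'M[R]_(m, n)) :
  Imx F -> Imx G -> Emx P (fun t => F t + G t) = Emx P F + Emx P G.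
Proof.
move=> hF hG; apply/matrixP => i j; rewrite !mxE -RintegralD //.
by apply: eq_Rintegral => t _; rewrite mxE.
Qed.

Lemma EmxZ m n c (F : T -> 'M[R]_(m, n)) :
  Imx F -> Emx P (fun t => c *: F t) = c *: Emx P F.
Proof.
move=> hF; apply/matrixP => i j; rewrite !mxE -RintegralZl //.
by apply: eq_Rintegral => t _; rewrite mxE.
Qed.

Lemma Emx_sum m n I (s : seq I) (F : I -> T -> 'M[R]_(m, n)) :
  (forall k, Imx (F k)) -> Emx P (fun t => \sum_(k <- s) F k t) = \sum_(k <- s) Emx P (F k).
Proof.
move=> hF; apply/matrixP => i j; rewrite !mxE summxE.
under eq_bigr do rewrite mxE.
rewrite -Rintegral_sum //.
  by apply: eq_Rintegral => t _; rewrite summxE.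
move=> k; exact: hF.
Qed.

Lemma Emx_mull m n k (A : 'M[R]_(k, m)) (F : T -> 'M[R]_(m, n)) :
  Imx F -> Emx P (fun t => A *m F t) = A *m Emx P F.
Proof.
move=> hF; apply/matrixP => i j; rewrite !mxE.
rewrite (@eq_Rintegral _ _ _ P _ (fun t => \sum_(l < m) A i l * F t l j)); last first.
  by move=> t _; rewrite mxE.
rewrite Rintegral_sum; last first.
  move=> l; apply: (@eqint ((fun t => ((A i l)%:E * (EFin \o (fun t => F t l j)) t)%E))) => //.
  exact: integrableZl.
apply: eq_bigr => l _; rewrite mxE RintegralZl //.
Qed.

Lemma EmxB m n (F G : T -> 'M[R]_(m, n)) :
  Imx F -> Imx G -> Emx P (fun t => F t - G t) = Emx P F - Emx P G.
Proof.
move=> hF hG; apply/matrixP => i j; rewrite !mxE -RintegralB //.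
by apply: eq_Rintegral => t _; rewrite !mxE.
Qed.

Lemma Emx_ext m n (F G : T -> 'M[R]_(m, n)) : (forall t, F t = G t) -> Emx P F = Emx P G.
Proof. by move=> FG; congr Emx; apply/funext. Qed.

Lemma Imx_bdd m n (h : T -> R) (F : T -> 'M[R]_(m, n)) :
  measurable_fun setT h -> (forall t, `|h t| <= 1) -> Imx F -> Imx (fun t => h t *: F t).
Proof.
move=> mh hb hF i j.
apply: (@eqint ((EFin \o h) \* (EFin \o (fun t => F t i j)))%E).
  by move=> t /=; rewrite mxE.
apply: integrableMr => //.
exists 1; split => // M M1 x _ /=; exact: le_trans (hb x) (ltW M1).
Qed.

Lemma Imx_realign m n m' n' (F : T -> 'M[R]_(m * m', n * n')) :
  Imx F -> Imx (fun t => realign (F t)).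
Proof. by move=> hF i j; apply: (@eqint _ _ _ (hF _ _)) => t /=; rewrite mxE. Qed.

Lemma Emx_realign m n m' n' (F : T -> 'M[R]_(m * m', n * n')) :
  Emx P (fun t => realign (F t)) = realign (Emx P F).
Proof.
apply/matrixP => i j; rewrite !mxE.
by apply: eq_Rintegral => t _; rewrite mxE.
Qed.

End Gen.


Section Alg.
Variable R : realType.

Lemma realign_tens (p d : nat) (A B : 'M[R]_(p, d)) :
  realign (A *t B) = vecm A *m (vecm B)^T.
Proof.
apply/matrixP => a b; rewrite !mxE big_ord1 !mxE !mxtens_indexK /=.
done.
Qed.

Lemma realignZ m n m' n' (c : R) (M : 'M[R]_(m * m', n * n')) :
  realign (c *: M) = c *: realign M.
Proof. by apply/matrixP => a b; rewrite !mxE. Qed.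

Lemma realignB m n m' n' (M N : 'M[R]_(m * m', n * n')) :
  realign (M - N) = realign M - realign N.
Proof. by apply/matrixP => a b; rewrite !mxE. Qed.

Lemma vecmZ m n (c : R) (A : 'M[R]_(m, n)) : vecm (c *: A) = c *: vecm A.
Proof. by apply/matrixP => a b; rewrite !mxE. Qed.

Lemma vecm_sum m n I (s : seq I) (F : I -> 'M[R]_(m, n)) :
  vecm (\sum_(i <- s) F i) = \sum_(i <- s) vecm (F i).
Proof. by apply/matrixP => a b; rewrite !mxE !summxE; apply: eq_bigr => i _; rewrite mxE. Qed.

Lemma outerZ n (c : R) (v : 'cV[R]_n) :
  (c *: v) *m (c *: v)^T = c ^+ 2 *: (v *m v^T).
Proof. by rewrite linearZ /= -scalemxAl -scalemxAr scalerA expr2. Qed.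

Lemma circE d (x : 'cV[R]_d) :
  circulant x *m (circulant x)^T = \sum_(i < d) shiftv i x *m (shiftv i x)^T.
Proof.
apply/matrixP => a b; rewrite !mxE summxE; apply: eq_bigr => i _.
by rewrite !mxE big_ord1 !mxE.
Qed.
Lemma gradfE (p d : nat) (W : 'M[R]_(p, d)) (x : 'cV[R]_d) :
  gradf W x = W *m (x *m x^T).
Proof.
apply/matrixP => i j; rewrite /gradf mxE mulmxA mxE big_ord1 mxE.
pose a k := (W *m x) k 0.
pose b k := ((delta_mx i j : 'M[R]_(p,d)) *m x) k 0.
pose P : {poly R} := \sum_(k < p) ((a k)%:P + b k *: 'X) ^+ 2 * (2^-1)%:P.
have -> : (fun t : R => fnet (W + t *: delta_mx i j) x) = horner P.
  apply/funext => t; rewrite /fnet /P horner_sum; apply: eq_bigr => k _.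
  rewrite /sigma2 mulmxDl -scalemxAl !mxE hornerM hornerC horner_exp.
  by rewrite hornerD hornerC hornerZ hornerX /a /b !mxE [_ * t]mulrC.
rewrite /P.
rewrite -derivE raddf_sum horner_sum.
rewrite (bigD1 i) //= big1 => [|k /negbTE kni]; last first.
  have -> : b k = 0.
    by rewrite /b !mxE big1 // => l _; rewrite !mxE kni mul0r.
  by rewrite scale0r addr0 -rmorphXn -polyCM derivC horner0.
rewrite addr0 derivM derivC mulr0 addr0 expr2 derivM derivD derivC derivZ derivX.
rewrite !hornerE /a /b !mxE (bigD1 j) //= big1 => [|l /negbTE lnj]; last first.
  by rewrite !mxE lnj andbF mul0r.
rewrite !mxE !eqxx /= !mul1r !addr0 mulr1.
set s := \sum_(j0 < d) _; rewrite -/s; by field.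
Qed.

Lemma UWE p d eta (W : 'M[R]_(p, d)) x :
  UW eta W x = realign ((W *t W) *m ((derive1 eta (fnet W x) ^+ 2) *:
                  ((x *m x^T) *t (x *m x^T)))).
Proof. by rewrite /UW -scalemxAr tensmx_mul realignZ realign_tens gradfE. Qed.

Lemma covWE p d eta (W : 'M[R]_(p, d)) x : (0 < d)%N ->
  (forall i x, fnet W (shiftv i x) = fnet W x) ->
  covW eta W x = (d%:R)^-1 *: \sum_(i < d) UW eta W (shiftv i x)
   - (d%:R ^+ 2)^-1 *: realign ((W *t W) *m ((derive1 eta (fnet W x) ^+ 2) *:
        ((circulant x *m (circulant x)^T) *t (circulant x *m (circulant x)^T)))).
Proof.
move=> d0 finv; rewrite /covW /covQ.
set c := derive1 eta (fnet W x).
congr (_ *: _ - _).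
  by apply: eq_bigr => i _; rewrite vecmZ outerZ.
under eq_bigr do rewrite vecmZ finv -/c.
rewrite -scaler_sumr -vecm_sum scalerA outerZ -scalemxAr tensmx_mul realignZ realign_tens.
rewrite scalerA exprMn exprVn; congr (_ *: (vecm _ *m (vecm _)^T)).
  by rewrite circE mulmx_sumr; apply: eq_bigr => i _; rewrite gradfE.
by rewrite circE mulmx_sumr; apply: eq_bigr => i _; rewrite gradfE.
Qed.
End Alg.


Section Der.
Variable R : realType.

Lemma derivable_continuous_all (eta : R -> R) :
  (forall u, derivable eta u 1) -> continuous eta.
Proof.
move=> de u; apply: differentiable_continuous; exact/derivable1_diffP.
Qed.

Lemma measurable_derive1 (eta : R -> R) :
  (forall u, derivable eta u 1) -> measurable_fun setT (derive1 eta).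
Proof.
move=> de; have ceta := derivable_continuous_all de.
have meta : measurable_fun setT eta := continuous_measurable_fun ceta.
pose hh := (fun (n : nat) (u : R) => (harmonic n)^-1 * (eta (harmonic n + u) - eta u)).
apply: (measurable_fun_cvg (h := hh)).
  move=> n; apply: measurable_funM => //; apply: measurable_funB => //.
  apply: measurableT_comp => //; apply: measurable_funD => //.
move=> u _.
have := de u; rewrite /derivable => /cvgr_dnbhsP H.
rewrite derive1E.
have /= := H (@harmonic R) (conj (fun n => lt0r_neq0 (harmonic_gt0 n)) cvg_harmonic).
rewrite /derive.
have -> : (fun n => hh n u) = (fun n => (harmonic n)^-1 *: ((eta \o shift u) (harmonic n)%:A - eta u)).
  by apply/funext => n; rewrite /hh /= /GRing.scale /= mulr1.
done.
Qed.
End Der.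
Section Meas.
Variables (R : realType) (d : nat).

Definition colt (y : d.-tuple R) : 'cV[R]_d := \col_k tnth y k.
Definition Meas (h : 'cV[R]_d -> R) :=
  measurable_fun [set: d.-tuple R] (fun y => h (colt y)).

Lemma colt_tup (x : 'cV[R]_d) : colt (tup x) = x.
Proof. by apply/matrixP => k l; rewrite !mxE tnth_mktuple (ord1 l). Qed.

Lemma Meas_ext h1 h2 : (forall x, h1 x = h2 x) -> Meas h1 -> Meas h2.
Proof. by move=> e; rewrite /Meas (_ : h2 = h1) //; apply/funext => x; rewrite e. Qed.

Lemma Meas_coord k : Meas (fun x => x k 0).
Proof.
apply: (eq_measurable_fun (fun y => tnth y k)); first by move=> y _; rewrite mxE.
exact: measurable_tnth.
Qed.

Lemma Meas_cst c : Meas (fun _ => c).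
Proof. exact: measurable_cst. Qed.

Lemma Meas_add h1 h2 : Meas h1 -> Meas h2 -> Meas (fun x => h1 x + h2 x).
Proof. by move=> m1 m2; exact: measurable_funD. Qed.

Lemma Meas_mul h1 h2 : Meas h1 -> Meas h2 -> Meas (fun x => h1 x * h2 x).
Proof. by move=> m1 m2; exact: measurable_funM. Qed.

Lemma Meas_sum I (s : seq I) (F : I -> 'cV[R]_d -> R) :
  (forall i, Meas (F i)) -> Meas (fun x => \sum_(i <- s) F i x).
Proof. by move=> mF; apply: (@measurable_sum _ _ _ _ _ _ (fun i y => F i (colt y))). Qed.

Lemma Meas_comp (g : R -> R) h : measurable_fun setT g -> Meas h -> Meas (fun x => g (h x)).
Proof. by move=> mg mh; exact: (measurableT_comp mg mh). Qed.

Lemma Meas_T dT (T : measurableType dT) (Y : T -> 'cV[R]_d) h :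
  (forall k, measurable_fun setT (fun t => Y t k 0)) -> Meas h ->
  measurable_fun setT (fun t => h (Y t)).
Proof.
move=> mY mh.
have mtY : measurable_fun setT (fun t => tup (Y t)).
  apply/measurable_fun_tnthP => k.
  apply: (eq_measurable_fun (fun t => Y t k 0)) => //.
  by move=> t _ /=; rewrite tnth_mktuple.
apply: (eq_measurable_fun (fun t => h (colt (tup (Y t))))).
  by move=> t _; rewrite colt_tup.
exact: (measurableT_comp mh mtY).
Qed.
End Meas.


Section Spec.
Variables (R : realType) (p d : nat) (eta : R -> R) (W : 'M[R]_(p, d)).

Lemma Meas_Wx k : Meas (fun x : 'cV[R]_d => (W *m x) k 0).
Proof.
apply: (@Meas_ext _ _ (fun x => \sum_(j < d) W k j * x j 0)); first by move=> x; rewrite mxE.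
by apply: Meas_sum => j; apply: Meas_mul; [exact: Meas_cst|exact: Meas_coord].
Qed.

Lemma Meas_fnet : Meas (fnet W).
Proof.
apply: (@Meas_ext _ _ (fun x => \sum_(k < p) ((W *m x) k 0 * (W *m x) k 0) * 2^-1)).
  by move=> x; rewrite /fnet; apply: eq_bigr => k _; rewrite /sigma2 expr2.
apply: Meas_sum => k; apply: Meas_mul; last exact: Meas_cst.
by apply: Meas_mul; exact: Meas_Wx.
Qed.

Lemma Meas_gradf a b : Meas (fun x => gradf W x a b).
Proof.
apply: (@Meas_ext _ _ (fun x => \sum_(l < d) W a l * (x l 0 * x b 0))).
  by move=> x; rewrite gradfE mxE; apply: eq_bigr => l _; rewrite !mxE big_ord1 !mxE.
apply: Meas_sum => l; apply: Meas_mul; first exact: Meas_cst.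
by apply: Meas_mul; exact: Meas_coord.
Qed.

Lemma Meas_UW a b : measurable_fun setT (derive1 eta) ->
  Meas (fun x => UW eta W x a b).
Proof.
move=> md.
apply: (@Meas_ext _ _ (fun x => (derive1 eta (fnet W x) * derive1 eta (fnet W x)) *
   (gradf W x (mxtens_unindex a).1 (mxtens_unindex a).2 *
    gradf W x (mxtens_unindex b).1 (mxtens_unindex b).2))).
  by move=> x; rewrite /UW !mxE big_ord1 !mxE expr2.
apply: Meas_mul; first by apply: Meas_mul; apply: Meas_comp md Meas_fnet.
by apply: Meas_mul; exact: Meas_gradf.
Qed.

Lemma Meas_vW : measurable_fun setT eta -> Meas (vW eta W).
Proof.
move=> me; apply: Meas_mul; first exact: Meas_comp me Meas_fnet.
apply: (@Meas_ext _ _ (fun x => 1 + (-1) * eta (fnet W x))).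
  by move=> x; rewrite mulN1r.
apply: Meas_add; first exact: Meas_cst.
by apply: Meas_mul; [exact: Meas_cst|exact: Meas_comp me Meas_fnet].
Qed.

Lemma vW_bd x : (forall u, 0 <= eta u <= 1) -> `|vW eta W x| <= 1.
Proof.
move=> he; rewrite /vW; have /andP[h0 h1] := he (fnet W x).
rewrite ger0_norm; first by nra.
by apply: mulr_ge0 => //; rewrite subr_ge0.
Qed.
End Spec.


Section Inv.
Variables (R : realType) (dT : measure_display) (T : measurableType dT).
Variable (P : probability T R).

Lemma meas_tup d (Y : T -> 'cV[R]_d) :
  (forall k, measurable_fun setT (fun t => Y t k 0)) ->
  measurable_fun setT (fun t => tup (Y t)).
Proof.
move=> mY; apply/measurable_fun_tnthP => k.
apply: (eq_measurable_fun (fun t => Y t k 0)) => //.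
by move=> t _ /=; rewrite tnth_mktuple.
Qed.

Lemma E_inv d (Y Z : T -> 'cV[R]_d) (H : 'cV[R]_d -> R) :
  (forall k, measurable_fun setT (fun t => Y t k 0)) ->
  (forall k, measurable_fun setT (fun t => Z t k 0)) ->
  (forall A, measurable A ->
     P ((fun t => tup (Y t)) @^-1` A) = P ((fun t => tup (Z t)) @^-1` A)) ->
  Meas H ->
  P.-integrable setT (EFin \o (fun t => H (Y t))) ->
  P.-integrable setT (EFin \o (fun t => H (Z t))) ->
  \int[P]_(t in setT) H (Y t) = \int[P]_(t in setT) H (Z t).
Proof.
move=> mY mZ law mH iY iZ.
have mtY := meas_tup mY; have mtZ := meas_tup mZ.
have mf : measurable_fun [set: d.-tuple R] (EFin \o (fun y => H (colt y))).
  exact/measurable_EFinP.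
have key (U : T -> 'cV[R]_d) (mU : measurable_fun setT (fun t => tup (U t))) :
    P.-integrable setT (EFin \o (fun t => H (U t))) ->
    (\int[P]_(t in setT) (H (U t))%:E =
     \int[pushforward P (fun t => tup (U t))]_(y in setT) (H (colt y))%:E)%E.
  move=> iU; rewrite integral_pushforward //.
  - by rewrite preimage_setT; apply: eq_integral => t _ /=; rewrite colt_tup.
  - rewrite preimage_setT; apply: (eqint _ iU) => t /=; by rewrite colt_tup.
rewrite /Rintegral (key _ mtY iY) (key _ mtZ iZ); congr fine.
by apply: eq_measure_integral => A mA _; exact: (law A mA).
Qed.
End Inv.


Lemma tens_sum (R : realType) m n m' n' (I J : finType) (A : I -> 'M[R]_(m, n)) (B : J -> 'M[R]_(m', n')) :
  (\sum_i A i) *t (\sum_j B j) = \sum_i \sum_j (A i *t B j).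
Proof.
apply/matrixP => a b; rewrite !mxE !summxE mulr_suml; apply: eq_bigr => i _.
rewrite summxE mulr_sumr; apply: eq_bigr => j _; by rewrite !mxE.
Qed.

Lemma sandwich (R : realType) n (U A : 'M[R]_n) : U \in unitmx ->
  U *m (invmx U *m A *m invmx U) *m U = A.
Proof.
by move=> uU; rewrite !mulmxA mulmxV // mul1mx -mulmxA mulVmx // mulmx1.
Qed.

Lemma sand2 (R : realType) n (U A B : 'M[R]_n) : U \in unitmx ->
  U *m (invmx U *m A *m invmx U - invmx U *m B *m invmx U) *m U = A - B.
Proof. by move=> uU; rewrite mulmxBr mulmxBl !sandwich. Qed.

Lemma sand3 (R : realType) n (U A B : 'M[R]_n) : U \in unitmx ->
  U *m (invmx U *m A *m invmx U - (invmx U *m A *m invmx U - invmx U *m B *m invmx U)) *m U = B.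
Proof. by move=> uU; rewrite opprB addrC subrK sandwich. Qed.

Lemma SaE (R : realType) (dT : measure_display) (T : measurableType dT)
  (P : probability T R) (p d : nat) (X : T -> 'cV[R]_d) (eta : R -> R)
  (W : 'M[R]_(p, d)) :
  let EU := Emx P (fun t => UW eta W (X t)) in
  EU \in unitmx ->
  EU *m SigmaaERM P X eta W *m EU =
    Emx P (fun t => vW eta W (X t) *: UW eta W (X t))
    - Emx P (fun t => vW eta W (X t) *: covW eta W (X t))
  /\ EU *m (SigmaERM P X eta W - SigmaaERM P X eta W) *m EU =
    Emx P (fun t => vW eta W (X t) *: covW eta W (X t)).
Proof.
move=> EU uEU. rewrite /SigmaaERM /SigmaERM. rewrite -/EU.
set A := Emx P _. set B := Emx P _.
split. exact: (sand2 A B uEU).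
exact: (sand3 A B uEU).
Qed.



Lemma EA_lem (R : realType) (p d : nat)
  (dT : measure_display) (T : measurableType dT) (P : probability T R)
  (X : T -> 'cV[R]_d) (eta : R -> R) (W : 'M[R]_(p, d)) (i : 'I_d) :
  measurable_fun setT eta -> measurable_fun setT (derive1 eta) ->
  (forall k : 'I_d, measurable_fun setT (fun t => X t k 0)) ->
  (forall (A : set (d.-tuple R)), measurable A ->
         P ((fun t => tup (X t)) @^-1` A) = P ((fun t => tup (shiftv i (X t))) @^-1` A)) ->
  (forall (x : 'cV[R]_d), fnet W (shiftv i x) = fnet W x) ->
  Imx P (fun t => vW eta W (X t) *: UW eta W (X t)) ->
  Imx P (fun t => vW eta W (X t) *: UW eta W (shiftv i (X t))) ->
  Emx P (fun t => vW eta W (X t) *: UW eta W (shiftv i (X t))) =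
  Emx P (fun t => vW eta W (X t) *: UW eta W (X t)).
Proof.
move=> me md hX law finv IvU IUs.
have vinv : forall x, vW eta W (shiftv i x) = vW eta W x.
  by move=> x; rewrite /vW finv.
apply/matrixP => a b.
rewrite [LHS]mxE [RHS]mxE.
have mS : forall k, measurable_fun setT (fun t => shiftv i (X t) k 0).
  move=> k; apply: (eq_measurable_fun (fun t => X t (shift_idx i k) 0)) => //.
  by move=> t _; rewrite /shiftv mxE.
have mH : Meas (fun x => vW eta W x * UW eta W x a b).
  by apply: Meas_mul; [exact: Meas_vW | exact: Meas_UW].
have I1 : P.-integrable setT (EFin \o (fun t => (fun x => vW eta W x * UW eta W x a b) (X t))).
  by apply: (eqint _ (IvU a b)) => t; congr (_%:E); rewrite mxE.
have I2 : P.-integrable setT (EFin \o (fun t => (fun x => vW eta W x * UW eta W x a b) (shiftv i (X t)))).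
  by apply: (eqint _ (IUs a b)) => t; congr (_%:E); rewrite mxE vinv.
have E := E_inv hX mS law mH I1 I2.
transitivity (\int[P]_(t in setT) (vW eta W (shiftv i (X t)) * UW eta W (shiftv i (X t)) a b)).
  by apply: eq_Rintegral => t _; rewrite mxE vinv.
apply: (etrans (esym E)).
apply: eq_Rintegral => t _.
by rewrite [RHS]mxE.
Qed.


Lemma EB_lem (R : realType) (p d : nat)
  (dT : measure_display) (T : measurableType dT) (P : probability T R)
  (X : T -> 'cV[R]_d) (eta : R -> R) (W : 'M[R]_(p, d)) :
  (0 < d)%N ->
  (forall (i : 'I_d) (x : 'cV[R]_d), fnet W (shiftv i x) = fnet W x) ->
  (forall i, Imx P (fun t => vW eta W (X t) *: UW eta W (shiftv i (X t)))) ->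
  Imx P (fun t => (vW eta W (X t) * derive1 eta (fnet W (X t)) ^+ 2) *:
     ((circulant (X t) *m (circulant (X t))^T) *t (circulant (X t) *m (circulant (X t))^T))) ->
  (forall i, Emx P (fun t => vW eta W (X t) *: UW eta W (shiftv i (X t))) =
             Emx P (fun t => vW eta W (X t) *: UW eta W (X t))) ->
  Emx P (fun t => vW eta W (X t) *: covW eta W (X t)) =
  Emx P (fun t => vW eta W (X t) *: UW eta W (X t)) -
  (d%:R ^+ 2)^-1 *: realign ((W *t W) *m Emx P (fun t =>
     (vW eta W (X t) * derive1 eta (fnet W (X t)) ^+ 2) *:
     ((circulant (X t) *m (circulant (X t))^T) *t (circulant (X t) *m (circulant (X t))^T)))).
Proof.
move=> d0 finv IUs IvCC EA.
set c := (d%:R ^+ 2)^-1.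
have Et : forall t, vW eta W (X t) *: covW eta W (X t) =
   d%:R^-1 *: \sum_(i < d) (vW eta W (X t) *: UW eta W (shiftv i (X t)))
   - c *: realign ((W *t W) *m ((vW eta W (X t) * derive1 eta (fnet W (X t)) ^+ 2) *:
     ((circulant (X t) *m (circulant (X t))^T) *t (circulant (X t) *m (circulant (X t))^T)))).
  move=> t; rewrite covWE // scalerBr; congr (_ - _).
    rewrite scalerA mulrC -scalerA.
    by rewrite scaler_sumr.
  rewrite -!scalemxAr !realignZ !scalerA /c; congr (_ *: _); ring.
rewrite (Emx_ext P Et).
rewrite EmxB; last 2 first.
- by apply: ImxZ; exact: Imx_sum.
- by apply: ImxZ; apply: Imx_realign; exact: Imx_mull.
rewrite EmxZ; last exact: Imx_sum.
rewrite EmxZ; last by apply: Imx_realign; exact: Imx_mull.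
rewrite Emx_sum // Emx_realign Emx_mull //.
under eq_bigr do rewrite EA.
rewrite sumr_const card_ord -scalerMnr scalerMnl -mulr_natr mulVf ?scale1r //.
by rewrite pnatr_eq0 -lt0n.
Qed.
Theorem corollary5p3 (R : realType) (p d : nat)
  (dT : measure_display) (T : measurableType dT) (P : probability T R)
  (X : T -> 'cV[R]_d) (eta : R -> R) (W : 'M[R]_(p, d)) :
  (forall u, 0 <= eta u <= 1) ->
  {homo eta : u v / u < v} ->
  (forall u, derivable eta u 1) ->
  (forall i : 'I_d, measurable_fun setT (fun t => X t i 0)) ->
  (forall a b c e : 'I_d,
     P.-integrable setT (fun t =>
       ((derive1 eta (fnet W (X t))) ^+ 2
        * (X t a 0 * X t b 0 * X t c 0 * X t e 0))%:E)) ->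
  let EU := Emx P (fun t => UW eta W (X t)) in
  let XX t := X t *m (X t)^T in
  let CC t := circulant (X t) *m (circulant (X t))^T in
  let w t := (derive1 eta (fnet W (X t))) ^+ 2 in
  EU = realign ((W *t W) *m Emx P (fun t => w t *: (XX t *t XX t)))
  /\ Emx P (fun t => vW eta W (X t) *: UW eta W (X t))
     = realign ((W *t W) *m Emx P (fun t => (vW eta W (X t) * w t) *: (XX t *t XX t)))
  /\ ((0 < d)%N ->
      (forall (i : 'I_d) (A : set (d.-tuple R)), measurable A ->
         P ((fun t => tup (X t)) @^-1` A) = P ((fun t => tup (shiftv i (X t))) @^-1` A)) ->
      (forall (i : 'I_d) (x : 'cV[R]_d), fnet W (shiftv i x) = fnet W x) ->
      EU \in unitmx ->
      EU *m SigmaaERM P X eta W *m EU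
        = realign ((W *t W) *m ((d%:R ^+ 2)^-1 *:
            Emx P (fun t => (vW eta W (X t) * w t) *: (CC t *t CC t))))
      /\ EU *m (SigmaERM P X eta W - SigmaaERM P X eta W) *m EU
        = realign ((W *t W) *m Emx P (fun t => (vW eta W (X t) * w t) *:
            (XX t *t XX t - (d%:R ^+ 2)^-1 *: (CC t *t CC t))))).
Proof.
move=> he _ hder hX hint EU XX CC w.
have md := measurable_derive1 hder.
have me : measurable_fun setT eta := continuous_measurable_fun (derivable_continuous_all hder).
have mvW : measurable_fun setT (fun t => vW eta W (X t)) := Meas_T hX (Meas_vW W me).
have vb : forall t, `|vW eta W (X t)| <= 1 by move=> t; exact: vW_bd.
pose xs (s : 'I_d -> 'I_d) t : 'cV[R]_d := \col_k X t (s k) 0.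
have I4 : forall s1 s2 s3 s4 : 'I_d -> 'I_d,
    Imx P (fun t => w t *: ((xs s1 t *m (xs s2 t)^T) *t (xs s3 t *m (xs s4 t)^T))).
  move=> s1 s2 s3 s4 i j.
  apply: (eqint _ (hint (s1 (mxtens_unindex i).1) (s2 (mxtens_unindex j).1)
                        (s3 (mxtens_unindex i).2) (s4 (mxtens_unindex j).2))) => t /=.
  by rewrite !mxE !big_ord1 !mxE !mulrA.
have Xid : forall t, X t = xs id t by move=> t; apply/matrixP => k l; rewrite !mxE (ord1 l).
have IXX : Imx P (fun t => w t *: (XX t *t XX t)).
  by apply: (Imx_ext _ (I4 id id id id)) => t; rewrite /XX -!Xid.
have ICC : Imx P (fun t => w t *: (CC t *t CC t)).
  apply: (Imx_ext (F := fun t => \sum_(i < d) \sum_(k < d) w t *: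
     ((xs (shift_idx i) t *m (xs (shift_idx i) t)^T) *t (xs (shift_idx k) t *m (xs (shift_idx k) t)^T)))).
    by move=> t; rewrite /CC circE tens_sum scaler_sumr; apply: eq_bigr => i _; rewrite scaler_sumr.
  by apply: Imx_sum => i; apply: Imx_sum => k; exact: I4.
have IU : Imx P (fun t => UW eta W (X t)).
  apply: (Imx_ext (F := fun t => realign ((W *t W) *m (w t *: (XX t *t XX t))))).
    by move=> t; rewrite UWE.
  by apply: Imx_realign; apply: Imx_mull.
have IvU : Imx P (fun t => vW eta W (X t) *: UW eta W (X t)) := Imx_bdd mvW vb IU.
have IvXX : Imx P (fun t => (vW eta W (X t) * w t) *: (XX t *t XX t)).
  by apply: (Imx_ext _ (Imx_bdd mvW vb IXX)) => t; rewrite scalerA.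
have IvCC : Imx P (fun t => (vW eta W (X t) * w t) *: (CC t *t CC t)).
  by apply: (Imx_ext _ (Imx_bdd mvW vb ICC)) => t; rewrite scalerA.
have part1 : EU = realign ((W *t W) *m Emx P (fun t => w t *: (XX t *t XX t))).
  rewrite /EU (Emx_ext P (G := fun t => realign ((W *t W) *m (w t *: (XX t *t XX t))))); last first.
    by move=> t; rewrite UWE.
  by rewrite Emx_realign Emx_mull.
have part2 : Emx P (fun t => vW eta W (X t) *: UW eta W (X t))
     = realign ((W *t W) *m Emx P (fun t => (vW eta W (X t) * w t) *: (XX t *t XX t))).
  rewrite (Emx_ext P (G := fun t => realign ((W *t W) *m ((vW eta W (X t) * w t) *: (XX t *t XX t))))); last first.
    by move=> t; rewrite UWE -realignZ scalemxAr scalerA.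
  by rewrite Emx_realign Emx_mull.
split; first exact: part1.
split; first exact: part2.
move=> d0 law finv uEU.
have [hS hS2] := SaE uEU.
have IUs : forall i, Imx P (fun t => vW eta W (X t) *: UW eta W (shiftv i (X t))).
  move=> i; apply: Imx_bdd mvW vb _.
  apply: (Imx_ext (F := fun t => realign ((W *t W) *m (w t *: ((xs (shift_idx i) t *m (xs (shift_idx i) t)^T) *t (xs (shift_idx i) t *m (xs (shift_idx i) t)^T)))))).
    by move=> t; rewrite UWE finv.
  by apply: Imx_realign; apply: Imx_mull; exact: I4.
have EA : forall i, Emx P (fun t => vW eta W (X t) *: UW eta W (shiftv i (X t))) =
                    Emx P (fun t => vW eta W (X t) *: UW eta W (X t)).
  by move=> i; exact: (EA_lem me md hX (law i) (finv i) IvU (IUs i)).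
have EB := EB_lem d0 finv IUs IvCC EA.
split.
  rewrite hS EB opprB addrC subrK -scalemxAr realignZ.
  done.
have Et2 : forall t, (vW eta W (X t) * w t) *: (XX t *t XX t - (d%:R ^+ 2)^-1 *: (CC t *t CC t)) =
   (vW eta W (X t) * w t) *: (XX t *t XX t) - (d%:R ^+ 2)^-1 *: ((vW eta W (X t) * w t) *: (CC t *t CC t)).
  by move=> t; rewrite scalerBr !scalerA [_ * (d%:R ^+ 2)^-1]mulrC.
rewrite hS2 EB (Emx_ext P Et2).
rewrite EmxB //; last exact: ImxZ.
by rewrite EmxZ // mulmxBr realignB -part2 -scalemxAr realignZ.
Qed.
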